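(* Let $f(\alpha,\beta)$ and $h(\alpha)$ be functions with $f(\alpha,\beta)=-f(\beta,\alpha)$ for all $\alpha,\beta$. If for all $\alpha,\beta,\gamma$ $$f(\alpha,\beta)h(\alpha)h(\beta)+f(\beta,\gamma)h(\beta)h(\gamma)+f(\gamma,\alpha)h(\gamma)h(\alpha)=f(\alpha,\beta)f(\beta,\gamma)f(\gamma,\alpha),$$ then for all $\alpha,\beta,\gamma,\delta$ $$f(\alpha,\beta)f(\beta,\gamma)f(\gamma,\alpha)+f(\beta,\alpha)f(\alpha,\delta)f(\delta,\beta)+f(\gamma,\beta)f(\beta,\delta)f(\delta,\gamma)+f(\alpha,\gamma)f(\gamma,\delta)f(\delta,\alpha)=0.$$ Conversely, if the latter four-term identity holds for all $\alpha,\beta,\gamma,\delta$, then the former three-term identity holds with $h(\alpha)=if(\alpha,\delta)$, for any fixed $\delta$. *)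

(* Defs.v *)
From mathcomp Require Import all_boot all_order all_algebra.
Set Implicit Arguments. Unset Strict Implicit. Unset Printing Implicit Defensive.
Import Order.TTheory GRing.Theory Num.Theory.
Local Open Scope ring_scope.

Definition antisym (C : numClosedFieldType) (T : Type) (f : T -> T -> C) :=
  forall a b, f a b = - f b a.

Definition three_term (C : numClosedFieldType) (T : Type)
  (f : T -> T -> C) (h : T -> C) :=
  forall a b c,
    f a b * h a * h b + f b c * h b * h c + f c a * h c * h a
    = f a b * f b c * f c a.

Definition four_term (C : numClosedFieldType) (T : Type) (f : T -> T -> C) :=
  forall a b c d,
    f a b * f b c * f c a + f b a * f a d * f d b
    + f c b * f b d * f d c + f a c * f c d * f d a = 0.

(* Main.v *)
Require Import Defs.
From mathcomp Require Import all_boot all_order all_algebra.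
From mathcomp Require Import ring.
Import Order.TTheory GRing.Theory Num.Theory.
Local Open Scope ring_scope.

Theorem theorem2 (C : numClosedFieldType) (T : Type) :
  (forall (f : T -> T -> C) (h : T -> C),
      antisym f -> three_term f h -> four_term f) /\
  (forall f : T -> T -> C,
      antisym f -> four_term f ->
      forall d : T, three_term f (fun a => 'i * f a d)).
Proof.
split.
- move=> f h Hf H a b c d.
  rewrite -(H a b c) -(H b a d) -(H c b d) -(H a c d).
  rewrite !(Hf b a) !(Hf c b) !(Hf a c) !(Hf d b) !(Hf d c) !(Hf d a).
  ring.
- move=> f Hf H d a b c.
  have E := H a b c d.
  rewrite !(Hf b a) !(Hf c b) !(Hf a c) !(Hf d b) !(Hf d c) !(Hf d a) in E.
  have Hi : ('i : C) ^+ 2 = -1 by exact: sqrCi.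
  have -> : f a b * f b c * f c a = - (f a b * f a d * f b d + f b c * f b d * f c d + f c a * f c d * f a d).
    by apply/eqP; rewrite -subr_eq0 opprK -E; apply/eqP; ring.
  transitivity (('i : C) ^+ 2 * (f a b * f a d * f b d + f b c * f b d * f c d + f c a * f c d * f a d)).
    ring.
  by rewrite Hi mulN1r.
Qed.
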